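(* Let $m\ge1$, $q=2^m$, $n=3$, let $a,b,c\in\mathbb F_{q^3}$, let $k$ be an integer with $0\le k<m$, and let $L(x)=\big(ax+bx^q+cx^{q^2}\big)^{2^k}$. Let $s=\gcd(k-1,m)$. Then $\mathrm{Tr}(x^{q+1})+L(x)$ is a permutation polynomial of $\mathbb F_{q^3}$ if and only if $(a+b+c)^{\frac{q-1}{2^s-1}}\ne1$ and either (a) $a+b+c\in\mathbb F_q^*$ and $a^{q^2+q+1}+b^{q^2+q+1}+c^{q^2+q+1}+\mathrm{Tr}\big(ab^qc^{q^2}\big)\ne0$, or (b) $a+b+c=0$ and $\mathrm{Tr}(a^{q+1}+a^qb+b^{q+1})\ne0$.
   Context: $\mathrm{Tr}(x)=x+x^q+x^{q^2}$ is the trace map of $\mathbb F_{q^3}$ over $\mathbb F_q$. Polynomials are regarded as maps on $\mathbb F_{q^3}$; a permutation polynomial is one inducing a bijection. *)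

(* Defs.v *)
From mathcomp Require Import all_boot all_order all_algebra all_field.
Set Implicit Arguments. Unset Strict Implicit. Unset Printing Implicit Defensive.
Import GRing.Theory.
Local Open Scope ring_scope.

Definition Tr (F : finFieldType) (q : nat) (x : F) : F :=
  x + x ^+ q + x ^+ (q ^ 2)%N.

Definition inFq (F : finFieldType) (q : nat) (x : F) : bool := x ^+ q == x.

(* s = gcd(k-1, m), with k-1 computed in the integers (so s = 1 if k = 0). *)
Definition sgcd (k m : nat) : nat := `|gcdz (k%:Z - 1) m%:Z|%N.

(* Main.v *)
Require Import Defs.
From mathcomp Require Import all_boot all_order all_algebra all_field.
From mathcomp Require Import ring zify.
Import GRing.Theory.
Local Open Scope ring_scope.

Lemma char2_add (F : fieldType) (H2 : 2 \in [pchar F]) j (x y : F) :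
  (x + y) ^+ (2 ^ j) = x ^+ (2 ^ j) + y ^+ (2 ^ j).
Proof.
elim: j => [|j IH]; first by rewrite !expr1.
rewrite expnSr !exprM IH sqrrD.
by rewrite -mulr_natr (pcharf0 H2) mulr0 addr0.
Qed.

Lemma char2_inj (F : fieldType) (H2 : 2 \in [pchar F]) j (x y : F) :
  x ^+ (2 ^ j) = y ^+ (2 ^ j) -> x = y.
Proof.
move=> h.
have : (x + y) ^+ (2 ^ j) = 0 by rewrite char2_add // h addrr_pchar2.
move/eqP; rewrite expf_eq0 => /andP [_ /eqP h0].
by rewrite -[y](addKr_pchar2 H2 x) h0 addr0.
Qed.

Definition setting (F : finFieldType) (q m : nat) :=
  [/\ 2 \in [pchar F], q = (2 ^ m)%N, #|F| = (q ^ 3)%N & (1 <= m)%N].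


Lemma s_char {F : finFieldType} {q m : nat} : setting F q m -> 2 \in [pchar F].
Proof. by case. Qed.

Lemma s_q2 {F : finFieldType} {q m : nat} : setting F q m -> (2 <= q)%N.
Proof.
case=> _ -> _ hm. by rewrite -{1}(expn1 2) leq_exp2l.
Qed.

Lemma fq_add {F : finFieldType} {q m : nat} (S : setting F q m) (x y : F) :
  (x + y) ^+ q = x ^+ q + y ^+ q.
Proof. case: (S) => H2 hq _ _; rewrite hq; exact: char2_add. Qed.

Lemma fq3 {F : finFieldType} {q m : nat} (S : setting F q m) (x : F) :
  x ^+ (q ^ 3) = x.
Proof. case: (S) => _ _ hF _; by rewrite -hF expf_card. Qed.

Lemma e_qq {F : finFieldType} {q m : nat} (S : setting F q m) (x : F) :
  (x ^+ q) ^+ q = x ^+ (q ^ 2).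
Proof. by rewrite -exprM mulnn. Qed.

Lemma e_q2q {F : finFieldType} {q m : nat} (S : setting F q m) (x : F) :
  (x ^+ (q ^ 2)) ^+ q = x.
Proof. by rewrite -exprM -expnSr (fq3 S). Qed.

Lemma e_qq2 {F : finFieldType} {q m : nat} (S : setting F q m) (x : F) :
  (x ^+ q) ^+ (q ^ 2) = x.
Proof. by rewrite -exprM mulnC -expnSr (fq3 S). Qed.

Lemma e_q2q2 {F : finFieldType} {q m : nat} (S : setting F q m) (x : F) :
  (x ^+ (q ^ 2)) ^+ (q ^ 2) = x ^+ q.
Proof. by rewrite -(e_qq S) (e_q2q S). Qed.

Lemma fq2_add {F : finFieldType} {q m : nat} (S : setting F q m) (x y : F) :
  (x + y) ^+ (q ^ 2) = x ^+ (q ^ 2) + y ^+ (q ^ 2).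
Proof. by rewrite -!(e_qq S) !(fq_add S). Qed.

Lemma fq_one {F : finFieldType} {q m : nat} (S : setting F q m) : (1 : F) ^+ q = 1.
Proof. exact: expr1n. Qed.

Lemma fq_zero {F : finFieldType} {q m : nat} (S : setting F q m) : (0 : F) ^+ q = 0.
Proof. by rewrite expr0n; have := s_q2 S; case: (q). Qed.

Lemma fq2_zero {F : finFieldType} {q m : nat} (S : setting F q m) : (0 : F) ^+ (q^2) = 0.
Proof. by rewrite -(e_qq S) !(fq_zero S). Qed.

Lemma Tr_fix {F : finFieldType} {q m : nat} (S : setting F q m) (z : F) :
  (Tr q z) ^+ q = Tr q z.
Proof.
rewrite /Tr !(fq_add S) (e_qq S) (e_q2q S).
by rewrite addrC addrA.
Qed.

Lemma Tr_add {F : finFieldType} {q m : nat} (S : setting F q m) (x y : F) :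
  Tr q (x + y) = Tr q x + Tr q y.
Proof. rewrite /Tr (fq_add S) (fq2_add S); ring. Qed.

Lemma Tr_scale {F : finFieldType} {q m : nat} (S : setting F q m) (al v : F) :
  al ^+ q = al -> Tr q (al * v) = al * Tr q v.
Proof.
move=> ha; rewrite /Tr !exprMn -!(e_qq S) !ha; ring.
Qed.

Definition mx3 {R : nzRingType} (l : seq (seq R)) : 'M[R]_3 :=
  \matrix_(i < 3, j < 3) nth 0 (nth [::] l i) j.

Lemma det3 (R : comNzRingType) (a b c d e f g h i : R) :
  \det (mx3 [:: [:: a; b; c]; [:: d; e; f]; [:: g; h; i]]) =
  a*(e*i - f*h) - b*(d*i - f*g) + c*(d*h - e*g).
Proof.
rewrite (expand_det_row _ 0) !big_ord_recl big_ord0 /cofactor.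
rewrite !(expand_det_row _ 0) !big_ord_recl !big_ord0 /cofactor.
rewrite !det_mx11 !mxE /=.
rewrite !expr0 !expr1.
ring.
Qed.

Lemma nonroot {F : finFieldType} {q m : nat} (S : setting F q m) (c0 c1 c2 : F) :
  [|| c0 != 0, c1 != 0 | c2 != 0] ->
  exists l, c0 * l + c1 * l ^+ q + c2 * l ^+ (q ^ 2) != 0.
Proof.
move=> hc.
have q2 := s_q2 S.
have hq1 : (q != 1)%N by lia.
have hqq : (q != q ^ 2)%N by rewrite -mulnn; nia.
have hq21 : (q ^ 2 != 1)%N by rewrite -mulnn; nia.
pose p : {poly F} := c0 *: 'X + c1 *: 'X^q + c2 *: 'X^(q ^ 2).
have hp : forall l, p.[l] = c0 * l + c1 * l ^+ q + c2 * l ^+ (q ^ 2).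
  by move=> l; rewrite /p !hornerE.
have pn0 : p != 0.
  case/or3P: hc => hc.
  - apply/eqP => /(congr1 (fun r : {poly F} => r`_1)).
    rewrite /p !coefD !coefZ coefX !coefXn eqxx coef0 eq_sym (negbTE hq1) eq_sym (negbTE hq21).
    by rewrite !mulr0 !addr0 mulr1 => /eqP; rewrite (negbTE hc).
  - apply/eqP => /(congr1 (fun r : {poly F} => r`_q)).
    rewrite /p !coefD !coefZ coefX !coefXn eqxx coef0 (negbTE hq1) (negbTE hqq).
    by rewrite !mulr0 add0r addr0 mulr1 => /eqP; rewrite (negbTE hc).
  - apply/eqP => /(congr1 (fun r : {poly F} => r`_(q ^ 2))).
    rewrite /p !coefD !coefZ coefX !coefXn eqxx coef0 (negbTE hq21) eq_sym (negbTE hqq).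
    by rewrite !mulr0 !add0r mulr1 => /eqP; rewrite (negbTE hc).
case: (boolP [exists l, c0 * l + c1 * l ^+ q + c2 * l ^+ (q ^ 2) != 0]) => [/existsP //|/existsPn hall].
exfalso.
have hroots : all (root p) (enum F).
  apply/allP => l _; rewrite /root hp; have := hall l; by rewrite negbK.
have := max_poly_roots pn0 hroots (enum_uniq F).
rewrite -cardE; case: (S) => _ _ -> _.
have sp : (size p <= (q ^ 2).+1)%N.
  rewrite /p; apply: (leq_trans (size_add _ _)); rewrite geq_max; apply/andP; split;
    last by apply: (leq_trans (size_scale_leq _ _)); rewrite size_polyXn.
  apply: (leq_trans (size_add _ _)); rewrite geq_max; apply/andP; split.
    by apply: (leq_trans (size_scale_leq _ _)); rewrite size_polyX -mulnn; nia.
  by apply: (leq_trans (size_scale_leq _ _)); rewrite size_polyXn -mulnn; nia.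
move=> h; have := leq_trans h sp.
rewrite -mulnn (_ : (q ^ 3 = q * q * q)%N); last by rewrite !expnS expn0 muln1 mulnA.
nia.
Qed.

Definition Lq {F : finFieldType} (q : nat) (a b c x : F) :=
  a * x + b * x ^+ q + c * x ^+ (q ^ 2).

Definition Dl {F : finFieldType} (q : nat) (a b c : F) :=
  a ^+ (q ^ 2 + q + 1)%N + b ^+ (q ^ 2 + q + 1)%N + c ^+ (q ^ 2 + q + 1)%N
       + Tr q (a * b ^+ q * c ^+ (q ^ 2)%N).

Lemma normE {F : finFieldType} (q : nat) (x : F) :
  x ^+ (q ^ 2 + q + 1)%N = x ^+ (q ^ 2) * x ^+ q * x.
Proof. by rewrite !exprD expr1. Qed.

Lemma Lq_add {F : finFieldType} {q m : nat} (S : setting F q m) a b c (x y : F) :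
  Lq q a b c (x + y) = Lq q a b c x + Lq q a b c y.
Proof. rewrite /Lq (fq_add S) (fq2_add S); ring. Qed.

Lemma Lq0 {F : finFieldType} {q m : nat} (S : setting F q m) (a b c : F) :
  Lq q a b c 0 = 0.
Proof. by rewrite /Lq (fq_zero S) (fq2_zero S) !mulr0 !addr0. Qed.

Lemma inj_add {F : finFieldType} {g : F -> F} :
  (forall x y, g (x + y) = g x + g y) ->
  injective g <-> (forall z, g z = 0 -> z = 0).
Proof.
move=> gD; have g0 : g 0 = 0.
  have h := gD 0 0; rewrite addr0 in h.
  by apply: (addrI (g 0)); rewrite addr0 -h.
have gN : forall x, g (- x) = - g x.
  by move=> x; apply/eqP; rewrite -subr_eq0 opprK -gD addNr g0.
split=> [inj z hz|h x y hxy]; first by apply: inj; rewrite hz g0.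
apply/eqP; rewrite -subr_eq0; apply/eqP/h.
by rewrite gD gN hxy subrr.
Qed.

Lemma dickson {F : finFieldType} {q m : nat} (S : setting F q m) (a b c : F) :
  injective (Lq q a b c) <-> Dl q a b c != 0.
Proof.
have H2 := pcharf0 (s_char S).
have q2 := s_q2 S.
rewrite (inj_add (Lq_add S a b c) : injective (Lq q a b c) <-> _).
split.
- move=> h; apply/negP => /eqP hD.
  pose M := mx3 [:: [:: a; c ^+ q; b ^+ (q ^ 2)]; [:: b; a ^+ q; c ^+ (q ^ 2)];
                  [:: c; b ^+ q; a ^+ (q ^ 2)]].
  have : \det M == 0.
    rewrite /M det3 -hD /Dl !normE /Tr !exprMn !(e_qq S) !(e_q2q S) !(e_qq2 S) !(e_q2q2 S).
    by rewrite !(GRing.subr_pchar2 (s_char S)); apply/eqP; ring.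
  case/det0P => v vn0 hv.
  have hE : forall j, (v *m M) 0 j = 0 by move=> j; rewrite hv mxE.
  have E0 := hE 0; have E1 := hE 1; have E2 := hE 2.
  rewrite !mxE !big_ord_recl !big_ord0 /M !mxE /= in E0 E1 E2.
  rewrite !addr0 !addrA in E0 E1 E2.
  set u0 : F := v 0 0 in E0 E1 E2; set u1 : F := v 0 (lift 0 0) in E0 E1 E2;
  set u2 : F := v 0 (lift 0 (lift 0 0)) in E0 E1 E2.
  have hu : [|| u0 != 0, u2 ^+ q != 0 | u1 ^+ (q ^ 2) != 0].
    case: (eqVneq u0 0) => [h0|hh]; last by apply/orP; left.
    case: (eqVneq u2 0) => [h2'|h2']; last by rewrite expf_neq0 ?orbT.
    case: (eqVneq u1 0) => [h1|h1]; last by rewrite (expf_neq0 _ h1) ?orbT.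
    exfalso; move/eqP: vn0; apply; apply/rowP => j; rewrite mxE.
    case: j => [[|[|[|n]]] Hj] //.
    - by rewrite -h0 /u0; congr (v _ _); apply: val_inj.
    - by rewrite -h1 /u1; congr (v _ _); apply: val_inj.
    - by rewrite -h2' /u2; congr (v _ _); apply: val_inj.
  have [l hl] := nonroot S u0 (u2 ^+ q) (u1 ^+ (q ^ 2)) hu.
  set x := u0 * l + u2 ^+ q * l ^+ q + u1 ^+ (q ^ 2) * l ^+ (q ^ 2) in hl.
  have hLx : Lq q a b c x = 0.
    have -> : Lq q a b c x =
      l * (u0 * a + u1 * b + u2 * c) + (l * (u0 * b ^+ (q ^ 2) + u1 * c ^+ (q ^ 2) + u2 * a ^+ (q ^ 2))) ^+ q
      + (l * (u0 * c ^+ q + u1 * a ^+ q + u2 * b ^+ q)) ^+ (q ^ 2).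
      rewrite /x /Lq !(fq_add S, fq2_add S, exprMn, e_qq S, e_q2q S, e_qq2 S, e_q2q2 S).
      ring.
    by rewrite E0 E1 E2 !mulr0 (fq_zero S) (fq2_zero S) !addr0.
  by move: hl; rewrite (h x hLx) eqxx.
- move=> hD z hz.
  suff : Dl q a b c * z = 0 by move/eqP; rewrite mulf_eq0 (negbTE hD) => /eqP.
  have e0 : a * z + b * z ^+ q + c * z ^+ (q ^ 2) = 0 by exact: hz.
  have e1 : a ^+ q * z ^+ q + b ^+ q * z ^+ (q ^ 2) + c ^+ q * z = 0.
    by move: (congr1 (fun w => w ^+ q) hz); rewrite /Lq (fq_zero S) !(fq_add S) !exprMn (e_qq S) (e_q2q S).
  have e2 : a ^+ (q ^ 2) * z ^+ (q ^ 2) + b ^+ (q ^ 2) * z + c ^+ (q ^ 2) * z ^+ q = 0.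
    by move: (congr1 (fun w => w ^+ (q ^ 2)) hz); rewrite /Lq (fq2_zero S) !(fq2_add S) !exprMn (e_qq2 S) (e_q2q2 S).
  have eD : Dl q a b c = a * (a ^+ q * a ^+ (q ^ 2) + b ^+ q * c ^+ (q ^ 2))
      + b * (c ^+ q * a ^+ (q ^ 2) + b ^+ q * b ^+ (q ^ 2))
      + c * (c ^+ q * c ^+ (q ^ 2) + a ^+ q * b ^+ (q ^ 2)).
    rewrite /Dl !normE /Tr !exprMn !(e_qq S) !(e_q2q S) !(e_qq2 S) !(e_q2q2 S).
    ring.
  have key : (a * (a ^+ q * a ^+ (q ^ 2) - b ^+ q * c ^+ (q ^ 2))
      - b * (c ^+ q * a ^+ (q ^ 2) - b ^+ q * b ^+ (q ^ 2))
      + c * (c ^+ q * c ^+ (q ^ 2) - a ^+ q * b ^+ (q ^ 2))) * z =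
     (a ^+ q * a ^+ (q ^ 2) - b ^+ q * c ^+ (q ^ 2)) * (a * z + b * z ^+ q + c * z ^+ (q ^ 2))
   - (b * a ^+ (q ^ 2) - c * c ^+ (q ^ 2)) * (a ^+ q * z ^+ q + b ^+ q * z ^+ (q ^ 2) + c ^+ q * z)
   + (b * b ^+ q - c * a ^+ q) * (a ^+ (q ^ 2) * z ^+ (q ^ 2) + b ^+ (q ^ 2) * z + c ^+ (q ^ 2) * z ^+ q).
    ring.
  rewrite !(GRing.subr_pchar2 (s_char S)) in key.
  by rewrite eD key e0 e1 e2; ring.
Qed.

Definition fP {F : finFieldType} (q k : nat) (a b c x : F) :=
  Tr q (x ^+ (q + 1)) + (Lq q a b c x) ^+ (2 ^ k).

Lemma trace_surj {F : finFieldType} {q m : nat} (S : setting F q m) (z r : F) :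
  z != 0 -> r ^+ q = r -> exists x, Tr q (x * z) = r.
Proof.
move=> z0 hr.
have hu : [|| (1:F) != 0, (1:F) != 0 | (1:F) != 0] by rewrite oner_neq0.
have [w hw] := nonroot S 1 1 1 hu.
rewrite !mul1r in hw.
have hT : Tr q w != 0 by exact: hw.
pose al := r / Tr q w.
have hal : al ^+ q = al by rewrite /al exprMn exprVn (Tr_fix S) hr.
exists (al * w / z).
by rewrite mulfVK // (Tr_scale S) // /al divfK.
Qed.

Lemma Q_def {F : finFieldType} {q m : nat} (S : setting F q m) (x : F) :
  Tr q (x ^+ (q + 1)) = x ^+ q * x + x ^+ (q ^ 2) * x ^+ q + x * x ^+ (q ^ 2).
Proof.
rewrite /Tr exprD expr1 !(exprMn, e_qq S, e_q2q S, e_qq2 S, e_q2q2 S); ring.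
Qed.

Lemma eq_char2 {F : finFieldType} {q m : nat} (S : setting F q m) (u v : F) :
  u + v = 0 -> u = v.
Proof.
by move/eqP; rewrite addr_eq0 (GRing.oppr_pchar2 (s_char S)) => /eqP.
Qed.

Lemma f_add {F : finFieldType} {q m : nat} (S : setting F q m) k (a b c x y : F) :
  fP q k a b c (x + y) = fP q k a b c x + fP q k a b c y + Tr q (x * (y ^+ q + y ^+ (q ^ 2))).
Proof.
rewrite /fP (Lq_add S) (char2_add _ (s_char S)) !(Q_def S) /Tr.
rewrite !(fq_add S, fq2_add S, exprMn, e_qq S, e_q2q S, e_qq2 S, e_q2q2 S).
ring.
Qed.

Lemma f0 {F : finFieldType} {q m : nat} (S : setting F q m) k (a b c : F) :
  fP q k a b c 0 = 0.
Proof.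
rewrite /fP (Lq0 S) expr0n expn_eq0 /= (Q_def S) (fq_zero S) (fq2_zero S).
by rewrite !mul0r !addr0.
Qed.

Lemma LqFq {F : finFieldType} {q m : nat} (S : setting F q m) (a b c y : F) :
  y ^+ q = y -> Lq q a b c y = (a + b + c) * y.
Proof. by move=> hy; rewrite /Lq -(e_qq S) !hy; ring. Qed.

Lemma fFq {F : finFieldType} {q m : nat} (S : setting F q m) k (a b c y : F) :
  y ^+ q = y -> fP q k a b c y = y ^+ 2 + ((a + b + c) * y) ^+ (2 ^ k).
Proof.
move=> hy; rewrite /fP (LqFq S) // (Q_def S) -(e_qq S) !hy.
congr (_ + _); rewrite -addrA (addrr_pchar2 (s_char S)) addr0; ring.
Qed.

Lemma BFq {F : finFieldType} {q m : nat} (S : setting F q m) (x y : F) :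
  y ^+ q = y -> Tr q (x * (y ^+ q + y ^+ (q ^ 2))) = 0.
Proof.
move=> hy; rewrite -(e_qq S) !hy (addrr_pchar2 (s_char S)) mulr0 /Tr.
by rewrite (fq_zero S) (fq2_zero S) !addr0.
Qed.

Lemma fP_fix {F : finFieldType} {q m : nat} (S : setting F q m) k (a b c y : F) :
  (Lq q a b c y) ^+ q = Lq q a b c y -> (fP q k a b c y) ^+ q = fP q k a b c y.
Proof.
move=> hL; rewrite /fP (fq_add S) (Tr_fix S); congr (_ + _).
by rewrite -exprM mulnC exprM hL.
Qed.

Definition condA {F : finFieldType} (q k : nat) (a b c : F) :=
  forall y : F, y ^+ q = y -> y != 0 -> ((a + b + c) * y) ^+ (2 ^ k) != y ^+ 2.

Definition condB {F : finFieldType} (q : nat) (a b c : F) :=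
  forall y : F, (Lq q a b c y) ^+ q = Lq q a b c y -> y ^+ q = y.

Lemma pp_iff {F : finFieldType} {q m : nat} (S : setting F q m) k (a b c : F) :
  injective (fP q k a b c) <-> condA q k a b c /\ condB q a b c.
Proof.
have H2 := s_char S.
split.
- move=> inj; split.
  + move=> y hy y0; apply/negP => /eqP he.
    have : fP q k a b c y = fP q k a b c 0.
      by rewrite (f0 S) (fFq S) // he (addrr_pchar2 H2).
    by move/inj => y00; move: y0; rewrite y00 eqxx.
  + move=> y hL; apply/eqP; apply/negPn/negP => hyq.
    have hr := fP_fix S k a b c y hL.
    have z0 : y ^+ q + y ^+ (q ^ 2) != 0.
      apply/negP => /eqP /(eq_char2 S) hz.
      have h2 : y ^+ (q ^ 2) = y by have := congr1 (fun w => w ^+ q) hz; rewrite (e_qq S) (e_q2q S).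
      by move: hyq; rewrite hz h2 eqxx.
    have [x hx] := trace_surj S _ _ z0 hr.
    have : fP q k a b c (x + y) = fP q k a b c x.
      by rewrite (f_add S) hx -addrA (addrr_pchar2 H2) addr0.
    move/inj => /eqP; rewrite -{2}(addr0 x) (inj_eq (addrI x)) => /eqP y0.
    by move: hyq; rewrite y0 (fq_zero S) eqxx.
- case=> hA hB.
  suff key : forall x y, fP q k a b c (x + y) = fP q k a b c x -> y = 0.
    move=> x x' he; have := key x' (x - x').
    rewrite addrC subrK => /(_ he) /eqP; rewrite subr_eq0 => /eqP //.
  move=> x y he.
  rewrite (f_add S) -addrA in he.
  have he2 : fP q k a b c y + Tr q (x * (y ^+ q + y ^+ (q ^ 2))) = 0.
    by apply: (addrI (fP q k a b c x)); rewrite he addr0.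
  have hfy := eq_char2 S _ _ he2.
  have hL' : (Lq q a b c y ^+ (2 ^ k)) ^+ q = Lq q a b c y ^+ (2 ^ k).
    have -> : Lq q a b c y ^+ (2 ^ k) = fP q k a b c y + Tr q (y ^+ (q + 1)).
      by rewrite /fP addrC addrA (addrr_pchar2 H2) add0r.
    by rewrite (fq_add S) hfy !(Tr_fix S).
  have hLq : (Lq q a b c y) ^+ q = Lq q a b c y.
    apply: (char2_inj _ H2 k); by rewrite -exprM mulnC exprM.
  have hy := hB y hLq.
  rewrite (BFq S) // (fFq S) // in hfy.
  case: (eqVneq y 0) => // y0.
  by have := hA y hy y0; rewrite -(eq_char2 S _ _ hfy) eqxx.
Qed.

Lemma char2_eq {F : finFieldType} (H2 : 2 \in [pchar F]) (K u v : F) :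
  u = v + 2%:R * K -> u = v.
Proof. by move=> ->; rewrite (pcharf0 H2) mul0r addr0. Qed.

Lemma poly_id {F : finFieldType} {q m : nat} (S : setting F q m) (a b : F) :
  Dl q (a + 1) (b + 1) (a + b + 1) = Tr q (a ^+ (q + 1) + a ^+ q * b + b ^+ (q + 1)).
Proof.
rewrite /Dl !normE /Tr !exprD !expr1.
rewrite !(fq_add S, fq2_add S, exprMn, e_qq S, e_q2q S, e_qq2 S, e_q2q2 S, expr1n).
move: (a ^+ q) (a ^+ (q ^ 2)) (b ^+ q) (b ^+ (q ^ 2)) => a1 a2 b1 b2.
apply: (char2_eq (s_char S) ((a * a1 * a2) + (a1 * a2) + (a * a2) + 2%:R * (a2) + (a * a1) + 2%:R * (a1) + 2%:R * (a) + 3%:R * (1) + (b * b1 * b2) + (b1 * b2) + (b * b2) + 2%:R * (b2) + (b * b1) + 2%:R * (b1) + 2%:R * (b) + (a1 * a2 * b) + (a * a2 * b1) + (a2 * b * b1) + (a2 * b1) + (a2 * b) + (a * a1 * b2) + (a1 * b * b2) + (a1 * b2) + (a * b1 * b2) + (a * b2) + (a1 * b) + (a * b1))).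
ring.
Qed.

Lemma TrFq {F : finFieldType} {q m : nat} (S : setting F q m) (y : F) :
  y ^+ q = y -> Tr q y = y.
Proof.
by move=> hy; rewrite /Tr -(e_qq S) !hy (addrr_pchar2 (s_char S)) add0r.
Qed.

Lemma exists_ker {F : finFieldType} {q m : nat} (S : setting F q m) (a b c : F) :
  ~ injective (Lq q a b c) -> exists z, z != 0 /\ Lq q a b c z = 0.
Proof.
rewrite (inj_add (Lq_add S a b c)) => h.
case: (boolP [exists z, (z != 0) && (Lq q a b c z == 0)]).
  by case/existsP => z /andP [z0 /eqP hz]; exists z.
move/existsPn => hn; exfalso; apply: h => z hz.
by apply/eqP; have := hn z; rewrite hz eqxx andbT negbK.
Qed.

Lemma B_fq {F : finFieldType} {q m : nat} (S : setting F q m) (a b c : F) :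
  condB q a b c -> (a + b + c) ^+ q = a + b + c.
Proof.
move=> hB.
case: (boolP (injectiveb (Lq q a b c))) => [/injectiveP inj | /injectiveP ninj].
  have [g gK Kg] := injF_bij inj.
  have hy1 := Kg 1.
  have hy : (g 1) ^+ q = g 1 by apply: hB; rewrite hy1 expr1n.
  rewrite (LqFq S) // in hy1.
  have y0 : g 1 != 0 by apply/negP => /eqP h0; move: hy1; rewrite h0 mulr0 => /eqP; rewrite eq_sym oner_eq0.
  have -> : a + b + c = (g 1)^-1 by apply: (mulIf y0); rewrite mulVf // hy1.
  by rewrite exprVn hy.
have [z [z0 hz]] := exists_ker S _ _ _ ninj.
have hzq : z ^+ q = z by apply: hB; rewrite hz (fq_zero S).
rewrite (LqFq S) // in hz.
move/eqP: hz; rewrite mulf_eq0 (negbTE z0) orbF => /eqP ->.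
exact: (fq_zero S).
Qed.

Lemma B_nz {F : finFieldType} {q m : nat} (S : setting F q m) (a b c : F) :
  (a + b + c) ^+ q = a + b + c -> a + b + c != 0 ->
  condB q a b c <-> injective (Lq q a b c).
Proof.
move=> ht t0; split.
- move=> hB; apply/(inj_add (Lq_add S a b c)) => z hz.
  have hzq : z ^+ q = z by apply: hB; rewrite hz (fq_zero S).
  rewrite (LqFq S) // in hz.
  by move/eqP: hz; rewrite mulf_eq0 (negbTE t0) /= => /eqP.
- move=> inj y hy.
  set r := Lq q a b c y in hy.
  have hy' : (r / (a + b + c)) ^+ q = r / (a + b + c) by rewrite exprMn exprVn hy ht.
  have e : Lq q a b c (r / (a + b + c)) = Lq q a b c y.
    by rewrite (LqFq S) // mulrC divfK.
  by rewrite -(inj _ _ e).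
Qed.

Lemma Lq1 {F : finFieldType} {q m : nat} (S : setting F q m) (a b c x : F) :
  Lq q (a + 1) (b + 1) (c + 1) x = Lq q a b c x + Tr q x.
Proof. rewrite /Lq /Tr; ring. Qed.

Lemma B_z {F : finFieldType} {q m : nat} (S : setting F q m) (a b c : F) :
  a + b + c = 0 ->
  condB q a b c <-> injective (Lq q (a + 1) (b + 1) (c + 1)).
Proof.
move=> t0; split.
- move=> hB; apply/(inj_add (Lq_add S _ _ _)) => z.
  rewrite (Lq1 S) => /(eq_char2 S) hz.
  have hzq : z ^+ q = z by apply: hB; rewrite hz (Tr_fix S).
  by move: hz; rewrite (LqFq S) // t0 mul0r (TrFq S).
- move=> inj y hy.
  set s' := Lq q (a + 1) (b + 1) (c + 1) y.
  have hs : s' ^+ q = s' by rewrite /s' (Lq1 S) (fq_add S) hy (Tr_fix S).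
  have e : Lq q (a + 1) (b + 1) (c + 1) s' = s'.
    by rewrite (Lq1 S) (LqFq S) // t0 mul0r add0r (TrFq S).
  have ey : s' = y := inj _ _ e.
  by rewrite -ey.
Qed.

Lemma gcd_pow2 a b : gcdn (2 ^ a - 1) (2 ^ b - 1) = (2 ^ (gcdn a b) - 1)%N.
Proof.
move: {2}(a + b)%N (leqnn (a + b)%N) => n; elim: n a b => [|n IH] a b hab.
  have a0 : a = 0%N by lia.
  have b0 : b = 0%N by lia.
  by rewrite a0 b0.
wlog hle : a b hab / (b <= a)%N.
  move=> H; case/orP: (leq_total b a) => h; first exact: H.
  by rewrite gcdnC [gcdn a b]gcdnC; apply: H => //; lia.
case: b hab hle => [|b] hab hle; first by rewrite gcdn0 expn0 subnn gcdn0.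
have [d ea] : exists d, a = (d + b.+1)%N by exists (a - b.+1)%N; lia.
subst a.
have X1 : (0 < 2 ^ d)%N by rewrite expn_gt0.
have Y1 : (0 < 2 ^ b.+1)%N by rewrite expn_gt0.
have -> : (2 ^ (d + b.+1) - 1 = 2 ^ d * (2 ^ b.+1 - 1) + (2 ^ d - 1))%N.
  rewrite expnD; move: (2 ^ d)%N (2 ^ b.+1)%N X1 Y1 => X Y hX hY; nia.
rewrite gcdnC gcdnMDl [gcdn (d + _) _]gcdnC gcdnDr.
apply: IH; lia.
Qed.

Lemma prim_exists {F : finFieldType} {q m : nat} (S : setting F q m) :
  exists w : F, (q ^ 3 - 1)%N.-primitive_root w.
Proof.
case: (S) => _ _ hF _.
have hN : (0 < q ^ 3 - 1)%N.
  have := s_q2 S; rewrite (_ : (q ^ 3 = q * q * q)%N); last by rewrite !expnS expn0 muln1 mulnA.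
  nia.
have : has (q ^ 3 - 1)%N.-primitive_root (enum (predC1 (0 : F))).
  apply: cyclic.has_prim_root => //.
  - apply/allP => x; rewrite mem_enum /= => x0.
    rewrite unity_rootE; apply/eqP; apply: (mulIf x0); rewrite mul1r -exprSr.
    rewrite subn1 prednK; first by rewrite -hF expf_card.
    by rewrite -hF; apply/card_gt0P; exists 0.
  - exact: enum_uniq.
  - by rewrite -cardE cardC1 hF subn1.
by case/hasP => w _ hw; exists w.
Qed.

Lemma fq_unit {F : finFieldType} {q m : nat} (S : setting F q m) (y : F) :
  y ^+ q = y -> y != 0 -> y ^+ (q - 1) = 1.
Proof.
move=> hy y0; apply: (mulIf y0); rewrite mul1r -exprSr subn1 prednK //.
by have := s_q2 S; lia.
Qed.

Lemma q3M {F : finFieldType} {q m : nat} (S : setting F q m) :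
  (q ^ 3 - 1 = (q - 1) * (q ^ 2 + q + 1))%N.
Proof.
have := s_q2 S; rewrite (_ : (q ^ 3 = q * q * q)%N); last by rewrite !expnS expn0 muln1 mulnA.
rewrite -mulnn; nia.
Qed.

Lemma core {F : finFieldType} {q m : nat} (S : setting F q m) (u : F) r :
  u ^+ q = u -> u != 0 ->
  (exists y, [/\ y ^+ q = y, y != 0 & u * y ^+ (2 ^ r - 1) = 1]) <->
  u ^+ ((q - 1) %/ (2 ^ (gcdn r m) - 1)) = 1.
Proof.
move=> hu u0.
have q2 := s_q2 S.
have qpos : (0 < q - 1)%N by rewrite subn_gt0.
set n := (2 ^ r - 1)%N; set d := (2 ^ (gcdn r m) - 1)%N; set e := ((q - 1) %/ d)%N.
have hd : d = gcdn (q - 1) n.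
  by rewrite /d /n gcdnC; case: (S) => _ -> _ _; rewrite gcd_pow2.
have dq : (d %| q - 1)%N by rewrite hd dvdn_gcdl.
have dn : (d %| n)%N by rewrite hd dvdn_gcdr.
have qe : (q - 1 = e * d)%N by rewrite /e divnK.
have e0 : (0 < e)%N by move: qe; case: (e) => //=; lia.
split.
- case=> y [hy y0 hyu].
  have : (u * y ^+ n) ^+ e = 1 by rewrite hyu expr1n.
  rewrite exprMn -exprM.
  have -> : (n * e = (q - 1) * (n %/ d))%N.
    by rewrite {1}(esym (divnK dn)) qe; ring.
  by rewrite exprM (fq_unit S) // expr1n mulr1.
- move=> hue.
  have [w hw] := prim_exists S.
  have hNM := q3M S.
  set M := (q ^ 2 + q + 1)%N in hNM.
  have M0 : (0 < M)%N by rewrite /M addn1.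
  have uN : u ^+ (q ^ 3 - 1) = 1 by rewrite hNM exprM (fq_unit S) // expr1n.
  have [[i _] /= hi] := prim_rootP hw uN.
  have h1 : ((q ^ 3 - 1) %| i * (q - 1))%N.
    by rewrite (prim_order_dvd hw) exprM -hi (fq_unit S).
  rewrite hNM [(i * _)%N]mulnC dvdn_pmul2l in h1 => //.
  have hij : (i = (i %/ M) * M)%N by rewrite divnK.
  set j := (i %/ M)%N in hij.
  have h2 : ((q ^ 3 - 1) %| i * e)%N.
    by rewrite (prim_order_dvd hw) exprM -hi hue.
  rewrite hNM hij qe (_ : (e * d * M = d * (e * M))%N) in h2; last by ring.
  rewrite (_ : (j * M * e = j * (e * M))%N) in h2; last by ring.
  rewrite dvdn_pmul2r in h2; last by rewrite muln_gt0 e0 M0.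
  have hjl : (j = (j %/ d) * d)%N by rewrite divnK.
  set l := (j %/ d)%N in hjl.
  case: (egcdnP n qpos) => km kn hb _.
  rewrite -hd in hb.
  have w0 : w != 0.
    have hN0 : (0 < q ^ 3 - 1)%N by rewrite hNM muln_gt0 qpos M0.
    apply/negP => /eqP w0; have := prim_expr_order hw; rewrite w0 expr0n eqn0Ngt hN0 /=.
    by move/eqP; rewrite eq_sym oner_eq0.
  exists (w ^+ (M * l * kn)); split.
  + have h : (w ^+ (M * l * kn)) ^+ (q - 1) = 1.
      rewrite -exprM (_ : (M * l * kn * (q - 1) = (q ^ 3 - 1) * (l * kn))%N).
        by rewrite exprM (prim_expr_order hw) expr1n.
      by rewrite hNM; ring.
    by rewrite -(subnK (ltnW q2)) addn1 exprS h mulr1.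
  + by rewrite expf_neq0.
  + rewrite hi -exprM -exprD (_ : (i + M * l * kn * n = (q ^ 3 - 1) * (l * km))%N).
      by rewrite exprM (prim_expr_order hw) expr1n.
    rewrite hNM hij hjl (_ : ((q - 1) * M * (l * km) = M * l * (km * (q - 1)))%N); last by ring.
    rewrite hb; ring.
Qed.

Lemma sgcd0 m : sgcd 0 m = 1%N.
Proof. by rewrite /sgcd sub0r gcdNz gcd1z. Qed.

Lemma sgcdS r m : sgcd r.+1 m = gcdn r m.
Proof.
rewrite /sgcd (_ : (r.+1)%:Z - 1 = r%:Z)%R; last by rewrite -addn1 PoszD addrK.
by [].
Qed.

Lemma e_pos {F : finFieldType} {q m : nat} (S : setting F q m) r :
  (0 < (q - 1) %/ (2 ^ (gcdn r m) - 1))%N.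
Proof.
have q2 := s_q2 S.
have qpos : (0 < q - 1)%N by rewrite subn_gt0.
have hd : (2 ^ (gcdn r m) - 1 = gcdn (q - 1) (2 ^ r - 1))%N.
  by rewrite gcdnC; case: (S) => _ -> _ _; rewrite gcd_pow2.
rewrite hd divn_gt0; last by rewrite gcdn_gt0 qpos.
by apply: dvdn_leq => //; rewrite dvdn_gcdl.
Qed.

Lemma A_iff {F : finFieldType} {q m : nat} (S : setting F q m) k (a b c : F) :
  (k < m)%N -> (a + b + c) ^+ q = a + b + c ->
  condA q k a b c <-> (a + b + c) ^+ ((q - 1) %/ (2 ^ (sgcd k m) - 1)) != 1.
Proof.
move=> hk ht.
have H2 := s_char S.
have q2 := s_q2 S.
have qpos : (0 < q - 1)%N by rewrite subn_gt0.
rewrite /condA.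
set t := a + b + c in ht *.
case: k hk => [|r] hk.
  rewrite sgcd0 expn1 subn1 /= divn1 -subn1.
  case: (eqVneq t 0) => [t0|t0].
    rewrite t0 expr0n eqn0Ngt qpos /= mulr0n eq_sym oner_eq0; split => // _ y hy y0.
    by rewrite mul0r expr0n expn_eq0 /= eq_sym expf_neq0.
  rewrite (fq_unit S) // eqxx; split => // h.
  by have := h t ht t0; rewrite expn0 expr1 expr2 eqxx.
rewrite sgcdS.
case: (eqVneq t 0) => [t0|t0].
  rewrite t0 expr0n eqn0Ngt (e_pos S) /= mulr0n eq_sym oner_eq0; split => // _ y hy y0.
  by rewrite mul0r expr0n expn_eq0 /= eq_sym expf_neq0.
set u := t ^+ (2 ^ r).
have hu : u ^+ q = u by rewrite /u exprAC ht.
have u0 : u != 0 by rewrite expf_neq0.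
have step : forall y : F, y != 0 ->
    ((t * y) ^+ (2 ^ r.+1) = y ^+ 2) <-> (u * y ^+ (2 ^ r - 1) = 1).
  move=> y y0.
  rewrite expnSr exprM -(expn1 2).
  split.
  - move/(char2_inj _ H2 1); rewrite exprMn -/u => h.
    apply: (mulIf y0); rewrite mul1r -mulrA -exprSr subn1 prednK ?expn_gt0 //.
  - move=> h; congr (_ ^+ _); rewrite exprMn -/u.
    by rewrite -{1}(subnK (expn_gt0 2 r)) addn1 exprS mulrCA h mulr1.
split.
- move=> hA; apply/negP => /eqP he.
  have hue : u ^+ ((q - 1) %/ (2 ^ gcdn r m - 1)) = 1 by rewrite /u exprAC he expr1n.
  have [y [hy y0 hyu]] := (proj2 (core S u r hu u0)) hue.
  by have := hA y hy y0; rewrite (proj2 (step y y0) hyu) eqxx.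
- move=> hne y hy y0; apply/negP => /eqP he.
  have hue := (proj1 (core S u r hu u0)) (ex_intro _ y (And3 hy y0 ((proj1 (step y y0)) he))).
  move: hne; rewrite /u exprAC -(expr1n F (2 ^ r)%N) in hue.
  by rewrite (char2_inj _ H2 _ _ _ hue) eqxx.
Qed.

Theorem mainTheorem5 (F : finFieldType) (m k : nat) (a b c : F) :
  (1 <= m)%N -> #|F| = (2 ^ (3 * m))%N -> (k < m)%N ->
  let q := (2 ^ m)%N in
  let s := sgcd k m in
  bijective (fun x : F =>
      Tr q (x ^+ (q + 1)) + (a * x + b * x ^+ q + c * x ^+ (q ^ 2)%N) ^+ (2 ^ k)%N)
  <->
  ((a + b + c) ^+ ((q - 1) %/ (2 ^ s - 1))%N != 1 /\
   ((inFq q (a + b + c) /\ a + b + c != 0 /\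
     a ^+ (q ^ 2 + q + 1)%N + b ^+ (q ^ 2 + q + 1)%N + c ^+ (q ^ 2 + q + 1)%N
       + Tr q (a * b ^+ q * c ^+ (q ^ 2)%N) != 0)
    \/
    (a + b + c = 0 /\
     Tr q (a ^+ (q + 1) + a ^+ q * b + b ^+ (q + 1)) != 0))).
Proof.
move=> hm hF hk q s.
have S : setting F q m.
  split => //; last by rewrite hF /q mulnC expnM.
  exact: (card_finPcharP hF).
change (bijective (fP q k a b c) <->
  ((a + b + c) ^+ ((q - 1) %/ (2 ^ sgcd k m - 1))%N != 1 /\
   (((a + b + c) ^+ q == a + b + c) /\ a + b + c != 0 /\ Dl q a b c != 0
    \/
    (a + b + c = 0 /\
     Tr q (a ^+ (q + 1) + a ^+ q * b + b ^+ (q + 1)) != 0)))).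
have -> : bijective (fP q k a b c) <-> injective (fP q k a b c).
  by split; [exact: bij_inj | exact: injF_bij].
rewrite (pp_iff S).
split.
- case=> hA hB.
  have ht := B_fq S a b c hB.
  have hAe := (A_iff S k a b c hk ht).1 hA.
  split => //.
  case: (eqVneq (a + b + c) 0) => t0.
  + right; split => //.
    have c_eq : a + b = c by apply: (eq_char2 S); rewrite t0.
    have := (B_z S a b c t0).1 hB; rewrite (dickson S) -c_eq.
    by rewrite (poly_id S).
  + left; split; first by apply/eqP.
    split => //; exact: (dickson S _ _ _).1 ((B_nz S _ _ _ ht t0).1 hB).
- case=> hAe [[/eqP ht [t0 hD]] | [t0 hT]].
  + split; first exact: (A_iff S k a b c hk ht).2 hAe.
    apply/(B_nz S _ _ _ ht t0); exact: (dickson S _ _ _).2 hD.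
  + have ht : (a + b + c) ^+ q = a + b + c by rewrite t0 (fq_zero S).
    split; first exact: (A_iff S k a b c hk ht).2 hAe.
    apply/(B_z S _ _ _ t0); apply/(dickson S).
    have c_eq : a + b = c by apply: (eq_char2 S); rewrite t0.
    by rewrite -c_eq (poly_id S).
Qed.
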